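(* Let $n\ge 3$. Then $I(\mathring H_{2,n})\simeq\mathbb{S}^2$, $I(\mathring H_{3,n})\simeq\mathbb{S}^3$, and $I(\mathring H_{k,n})\simeq\Sigma^2 I(H_{k-2,n})$ for all $k\ge 4$.
   Context: $P_k$ is the path with vertices $u_1,\dots,u_k$; $K_n$ is the complete graph on $\{1,\dots,n\}$; $P_k\times K_n$ is the categorical product (vertices $(u_i,j)$, with $(u_i,a)$ adjacent to $(u_{i'},b)$ iff $|i-i'|=1$ and $a\ne b$). For $k\ge 2$, $H_{k,n}$ is obtained from $P_k\times K_n$ by adding new vertices $v_1,v_2$ and the edges $(u_1,i)v_1$ for all $i\ge2$ and $(u_k,i)v_2$ for all $i\ne2$; $\mathring H_{k,n}$ is obtained from $H_{k,n}$ by adding new vertices $w_1,w_2$ and the edges $v_1w_1$, $v_2w_2$. $I(G)$ is the independence complex (simplices = non-empty independent vertex sets); $\Sigma$ is suspension. *)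

(* Defs.v *)
From HB Require Import structures.
From mathcomp Require Import all_boot all_order all_algebra.
From mathcomp Require Import Rstruct.
Set Implicit Arguments. Unset Strict Implicit. Unset Printing Implicit Defensive.
Import Order.TTheory GRing.Theory Num.Theory.
Local Open Scope ring_scope.

Notation R := Rdefinitions.R.

(* Vertex (u_i, j) of P_k x K_n is (i-1, j-1) : 'I_k * 'I_n (0-based). *)
Definition grid_adj (k n : nat) (p q : 'I_k * 'I_n) : bool :=
  (((p.1 : nat).+1 == q.1) || ((q.1 : nat).+1 == p.1)) && (p.2 != q.2).

(* H_{k,n}: vertices ('I_k * 'I_n) + 'I_2 ; inr 0 = v_1, inr 1 = v_2.
   Edges (u_1,i)v_1 for i >= 2 (0-based: j <> 0) and
         (u_k,i)v_2 for i <> 2  (0-based: j <> 1). *)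
Definition ext_adj (k n : nat) (p : 'I_k * 'I_n) (e : nat) : bool :=
  ((e == 0%N) && ((p.1 : nat) == 0%N) && ((p.2 : nat) != 0%N))
  || ((e == 1%N) && ((p.1 : nat) == k.-1) && ((p.2 : nat) != 1%N)).

Definition H_vert (k n : nat) : finType := (('I_k * 'I_n) + 'I_2)%type.

Definition H_adj (k n : nat) : rel (H_vert k n) := fun x y =>
  match x, y with
  | inl p, inl q => grid_adj p q
  | inl p, inr e => @ext_adj k n p e
  | inr e, inl p => @ext_adj k n p e
  | inr _, inr _ => false
  end.

(* Hring_{k,n} (the paper's H with a ring): vertices ('I_k * 'I_n) + 'I_4 ;
   inr 0 = v_1, inr 1 = v_2, inr 2 = w_1, inr 3 = w_2; extra edges
   v_1 w_1 and v_2 w_2. *)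
Definition Hring_vert (k n : nat) : finType := (('I_k * 'I_n) + 'I_4)%type.

Definition extra_adj (e f : nat) : bool :=
  ((e == 0%N) && (f == 2%N)) || ((e == 2%N) && (f == 0%N))
  || ((e == 1%N) && (f == 3%N)) || ((e == 3%N) && (f == 1%N)).

Definition Hring_adj (k n : nat) : rel (Hring_vert k n) := fun x y =>
  match x, y with
  | inl p, inl q => grid_adj p q
  | inl p, inr e => @ext_adj k n p e
  | inr e, inl p => @ext_adj k n p e
  | inr e, inr f => extra_adj e f
  end.

Definition indep_complex (V : finType) (adj : rel V) : pred {set V} :=
  fun s => (s != set0) && [forall x in s, forall y in s, ~~ adj x y].

(* Simplicial suspension: join with two new points (inr false/true). *)
Definition susp (V : finType) (K : pred {set V}) : pred {set (V + bool)%type} :=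
  fun s =>
    (s != set0)
    && (((inl @^-1: s) == set0) || K (inl @^-1: s))
    && (#|(inr @^-1: s) : {set bool}| <= 1)%N.

(* Spaces are subsets of R^U (U finite) with the sup metric.            *)

Definition space (U : finType) := (U -> R) -> Prop.

Definition realization (V : finType) (K : pred {set V}) : space V :=
  fun x => (forall v, 0 <= x v) /\ \sum_(v : V) x v = 1
           /\ K [set v | x v != 0].

Definition sphere (d : nat) : space 'I_d.+1 :=
  fun x => \sum_(i < d.+1) x i ^+ 2 = 1.

Definition maps_into (U V : finType) (A : space U) (B : space V)
  (f : (U -> R) -> (V -> R)) : Prop := forall x, A x -> B (f x).

Definition cont_on (U V : finType) (A : space U)
  (f : (U -> R) -> (V -> R)) : Prop :=
  forall x, A x -> forall e : R, 0 < e -> exists2 d : R, 0 < d &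
    forall y, A y -> (forall u, `|x u - y u| < d) ->
      forall v, `|f x v - f y v| < e.

Definition homotopic (U V : finType) (A : space U) (B : space V)
  (f0 f1 : (U -> R) -> (V -> R)) : Prop :=
  exists H : R -> (U -> R) -> (V -> R),
    [/\ forall t x, 0 <= t <= 1 -> A x -> B (H t x),
        forall x, A x -> H 0 x = f0 x,
        forall x, A x -> H 1 x = f1 x &
        forall t x, 0 <= t <= 1 -> A x -> forall e : R, 0 < e ->
          exists2 d : R, 0 < d &
            forall s y, 0 <= s <= 1 -> A y -> `|t - s| < d ->
              (forall u, `|x u - y u| < d) ->
              forall v, `|H t x v - H s y v| < e].

Definition homotopy_equiv (U V : finType) (A : space U) (B : space V) : Prop :=
  exists (f : (U -> R) -> (V -> R)) (g : (V -> R) -> (U -> R)),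
    [/\ maps_into A B f, cont_on A f, maps_into B A g & cont_on B g]
    /\ homotopic A A (fun x => g (f x)) id
    /\ homotopic B B (fun y => f (g y)) id.

Definition I_H (k n : nat) : space (H_vert k n) :=
  realization (indep_complex (@H_adj k n)).
Definition I_Hring (k n : nat) : space (Hring_vert k n) :=
  realization (indep_complex (@Hring_adj k n)).
Definition susp2_I_H (k n : nat) : space ((H_vert k n + bool) + bool)%type :=
  realization (susp (susp (indep_complex (@H_adj k n)))).

(* Main.v *)
Require Import Defs.
From HB Require Import structures.
From mathcomp Require Import all_boot all_order all_algebra.
From mathcomp Require Import Rstruct ring lra zify.
From Stdlib Require Import FunctionalExtensionality.
Import Defs.
Set Implicit Arguments. Unset Strict Implicit. Unset Printing Implicit Defensive.
Import Order.TTheory GRing.Theory Num.Theory.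

Local Open Scope ring_scope.

Lemma cont_comp (U V W : finType) (A : space U) (B : space V)
  (f : (U -> R) -> (V -> R)) (g : (V -> R) -> (W -> R)) :
  maps_into A B f -> cont_on A f -> cont_on B g -> cont_on A (fun x => g (f x)).
Proof.
move=> mf cf cg x Ax e e0.
have [d1 d10 h1] := cg (f x) (mf x Ax) e e0.
have [d2 d20 h2] := cf x Ax d1 d10.
exists d2 => // y Ay hxy v; apply: h1; [exact: mf | exact: h2].
Qed.

Lemma homotopic_conj (U V : finType) (A : space U) (B : space V)
  (f : (U -> R) -> (V -> R)) (g : (V -> R) -> (U -> R)) F0 F1 :
  maps_into A B f -> cont_on A f -> maps_into B A g -> cont_on B g ->
  homotopic B B F0 F1 ->
  homotopic A A (fun x => g (F0 (f x))) (fun x => g (F1 (f x))).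
Proof.
move=> mf cf mg cg [H [HB H0 H1 Hc]].
exists (fun t x => g (H t (f x))); split.
- by move=> t x ht Ax; apply: mg; apply: HB => //; apply: mf.
- by move=> x Ax; rewrite H0 //; apply: mf.
- by move=> x Ax; rewrite H1 //; apply: mf.
move=> t x ht Ax e e0.
have [d1 d10 h1] := cg (H t (f x)) (HB t (f x) ht (mf x Ax)) e e0.
have [d2 d20 h2] := Hc t (f x) ht (mf x Ax) d1 d10.
have [d3 d30 h3] := cf x Ax d2 d20.
exists (Num.min d2 d3); first by rewrite lt_min d20 d30.
move=> s y hs Ay hts hxy v.
have hd2 : `|t - s| < d2 by move: hts; rewrite lt_min => /andP[].
have hd3 : forall u, `|x u - y u| < d3.
  by move=> u; move: (hxy u); rewrite lt_min => /andP[].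
apply: h1; first by apply: HB => //; apply: mf.
by apply: h2 => //; [apply: mf | apply: h3].
Qed.
Lemma homotopic_trans (U V : finType) (A : space U) (B : space V) f0 f1 f2 :
  homotopic A B f0 f1 -> homotopic A B f1 f2 -> homotopic A B f0 f2.
Proof.
move=> [H [HB H0 H1 Hc]] [G [GB G0 G1 Gc]].
pose K t x := if t <= 2^-1 then H (2 * t) x else G (2 * t - 1) x.
have r1 : forall t : R, 0 <= t <= 1 -> t <= 2^-1 -> 0 <= 2 * t <= 1.
  by move=> t /andP[? ?] ?; apply/andP; split; lra.
have r2 : forall t : R, 0 <= t <= 1 -> ~~ (t <= 2^-1) -> 0 <= 2 * t - 1 <= 1.
  by move=> t /andP[? ?]; rewrite -ltNge => ?; apply/andP; split; lra.
exists K; split.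
- move=> t x ht Ax; rewrite /K; case: ifP => h.
    by apply: HB => //; apply: r1.
  by apply: GB => //; apply: r2 => //; rewrite h.
- by move=> x Ax; rewrite /K ifT ?mulr0 ?H0 //; lra.
- move=> x Ax; rewrite /K ifF; last by apply/negbTE; rewrite -ltNge; lra.
  by rewrite mulr1 (_ : 2 - 1 = 1 :> R) ?G1 //; lra.
move=> t x ht Ax e e0.
have e20 : 0 < e / 2 by lra.
pose t1 : R := if t <= 2^-1 then 2 * t else 1.
pose t2 : R := if t <= 2^-1 then 0 else 2 * t - 1.
have ht1 : 0 <= t1 <= 1 by rewrite /t1; case: ifP => h; [apply: r1 | rewrite ler01 lexx].
have ht2 : 0 <= t2 <= 1 by rewrite /t2; case: ifP => h; [rewrite lexx ler01 | apply: r2 => //; rewrite h].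
have [d1 d10 h1] := Hc t1 x ht1 Ax (e / 2) e20.
have [d2 d20 h2] := Gc t2 x ht2 Ax (e / 2) e20.
exists (Num.min d1 d2 / 2).
  by rewrite divr_gt0 // lt_min d10 d20.
move=> s y hs Ay hts hxy v.
have hm1 : Num.min d1 d2 <= d1 by rewrite ge_min lexx.
have hm2 : Num.min d1 d2 <= d2 by rewrite ge_min lexx orbT.
have hmp : 0 < Num.min d1 d2 by rewrite lt_min d10 d20.
have hxy1 : forall u, `|x u - y u| < d1.
  by move=> u; apply: (lt_le_trans (hxy u)); lra.
have hxy2 : forall u, `|x u - y u| < d2.
  by move=> u; apply: (lt_le_trans (hxy u)); lra.
have hxx1 : forall u, `|x u - x u| < d1 by move=> u; rewrite subrr normr0.
have hxx2 : forall u, `|x u - x u| < d2 by move=> u; rewrite subrr normr0.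
have hts' : - (Num.min d1 d2 / 2) < t - s < Num.min d1 d2 / 2.
  by rewrite -ltr_norml.
case/andP: hts' => hts1 hts2.
have hlt : forall a b c : R, `|a - b| < e / 2 -> `|b - c| < e / 2 -> `|a - c| < e.
  move=> a b c hab hbc.
  have -> : a - c = (a - b) + (b - c) by ring.
  apply: (le_lt_trans (ler_normD _ _)); lra.
have h01 : 0 <= (1:R) <= 1 by apply/andP; split; lra.
have h00 : 0 <= (0:R) <= 1 by apply/andP; split; lra.
rewrite /K; case: ifP => ht'; case: ifP => hs'.
- have := h1 (2 * s) y (r1 s hs hs') Ay.
  rewrite /t1 ht' => h.
  have hh : `|2 * t - 2 * s| < d1 by rewrite ltr_norml; apply/andP; split; lra.
  by have := h hh hxy1 v; lra.
- have hs'' : 2^-1 < s by rewrite ltNge hs'.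
  apply: (hlt _ (H 1 x v)).
    have := h1 1 x h01 Ax; rewrite /t1 ht' => h; apply: h => //.
    by rewrite ltr_norml; apply/andP; split; lra.
  rewrite H1 // -G0 //.
  have := h2 (2 * s - 1) y (r2 s hs (negbT hs')) Ay; rewrite /t2 ht' => h; apply: h => //.
  by rewrite ltr_norml; apply/andP; split; lra.
- have ht'' : 2^-1 < t by rewrite ltNge ht'.
  apply: (hlt _ (G 0 x v)).
    have := h2 0 x h00 Ax; rewrite /t2 ht' => h; apply: h => //.
    by rewrite ltr_norml; apply/andP; split; lra.
  rewrite G0 // -H1 //.
  have := h1 (2 * s) y (r1 s hs hs') Ay; rewrite /t1 ht' => h; apply: h => //.
  by rewrite ltr_norml; apply/andP; split; lra.
- have := h2 (2 * s - 1) y (r2 s hs (negbT hs')) Ay.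
  rewrite /t2 ht' => h.
  have hh : `|2 * t - 1 - (2 * s - 1)| < d2 by rewrite ltr_norml; apply/andP; split; lra.
  by have := h hh hxy2 v; lra.
Qed.

Lemma homotopy_equiv_trans (U V W : finType) (A : space U) (B : space V) (C : space W) :
  homotopy_equiv A B -> homotopy_equiv B C -> homotopy_equiv A C.
Proof.
move=> [f1 [g1 [[mf1 cf1 mg1 cg1] [h1 h1']]]] [f2 [g2 [[mf2 cf2 mg2 cg2] [h2 h2']]]].
exists (fun x => f2 (f1 x)), (fun z => g1 (g2 z)); split; [split|split].
- by move=> x Ax; apply: mf2; apply: mf1.
- exact: (cont_comp mf1 cf1 cf2).
- by move=> z Cz; apply: mg1; apply: mg2.
- exact: (cont_comp mg2 cg2 cg1).
- apply: homotopic_trans h1.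
  exact: (homotopic_conj mf1 cf1 mg1 cg1 h2).
- apply: homotopic_trans h2'.
  exact: (homotopic_conj mg2 cg2 mf2 cf2 h1').
Qed.

Definition dist1 (U : finType) (x y : U -> R) := \sum_u `|x u - y u|.

Lemma dist1_lt (U : finType) (x y : U -> R) d :
  (forall u, `|x u - y u| < d) -> dist1 x y <= #|U|%:R * d.
Proof.
move=> h; have : dist1 x y <= \sum_(u : U) d by apply: ler_sum => u _; apply: ltW.
by rewrite sumr_const mulr_natl.
Qed.

Lemma dist1_ge0 (U : finType) (x y : U -> R) : 0 <= dist1 x y.
Proof. by apply: sumr_ge0 => u _. Qed.

Lemma dist1_coord (U : finType) (x y : U -> R) u : `|x u - y u| <= dist1 x y.
Proof. by rewrite /dist1 (bigD1 u) //= lerDl sumr_ge0. Qed.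

Lemma lip_cont (U V : finType) (A : space U) (f : (U -> R) -> (V -> R)) (C : R) :
  0 <= C ->
  (forall x y, A x -> A y -> forall v, `|f x v - f y v| <= C * dist1 x y) ->
  cont_on A f.
Proof.
move=> C0 hf x Ax e e0.
have N0 : 0 <= (#|U|%:R : R) by rewrite ler0n.
set M := C * #|U|%:R.
have M0 : 0 <= M by rewrite mulr_ge0.
have M1 : 0 < M + 1 by lra.
exists (e / (M + 1)); first by rewrite divr_gt0.
move=> y Ay hxy v.
apply: (le_lt_trans (hf x y Ax Ay v)).
apply: (le_lt_trans (y := C * (#|U|%:R * (e / (M+1))))).
  by rewrite ler_wpM2l // dist1_lt.
rewrite mulrA -/M.
have -> : M * (e / (M + 1)) = e - e / (M + 1) by field; lra.
have : 0 < e / (M + 1) by rewrite divr_gt0.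
lra.
Qed.

Lemma lip_homotopic (U V : finType) (A : space U) (B : space V) f0 f1
  (H : R -> (U -> R) -> (V -> R)) (C : R) :
  0 <= C ->
  (forall t x, 0 <= t <= 1 -> A x -> B (H t x)) ->
  (forall x, A x -> H 0 x = f0 x) ->
  (forall x, A x -> H 1 x = f1 x) ->
  (forall t s x y, 0 <= t <= 1 -> 0 <= s <= 1 -> A x -> A y -> forall v,
      `|H t x v - H s y v| <= C * (`|t - s| + dist1 x y)) ->
  homotopic A B f0 f1.
Proof.
move=> C0 HB H0 H1 hH; exists H; split => // t x ht Ax e e0.
have N0 : 0 <= (#|U|%:R : R) by rewrite ler0n.
set M := C * (#|U|%:R + 1).
have M0 : 0 <= M by rewrite mulr_ge0 //; lra.
have M1 : 0 < M + 1 by lra.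
exists (e / (M + 1)); first by rewrite divr_gt0.
move=> s y hs Ay hts hxy v.
apply: (le_lt_trans (hH t s x y ht hs Ax Ay v)).
apply: (le_lt_trans (y := C * ((#|U|%:R + 1) * (e / (M+1))))).
  rewrite ler_wpM2l // mulrDl mul1r addrC.
  have := dist1_lt hxy; have := ltW hts; lra.
rewrite mulrA -/M.
have -> : M * (e / (M + 1)) = e - e / (M + 1) by field; lra.
have : 0 < e / (M + 1) by rewrite divr_gt0.
lra.
Qed.

Local Close Scope ring_scope.

Local Open Scope ring_scope.

Definition push (U V : finType) (f : U -> V) (x : U -> R) : V -> R :=
  fun v => \sum_(u | f u == v) x u.

Lemma push_sumF (U V : finType) (f : U -> V) (F : U -> R) :
  \sum_v \sum_(u | f u == v) F u = \sum_u F u.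
Proof. by rewrite (partition_big f predT) //. Qed.

Lemma push_ge0 (U V : finType) (f : U -> V) x v :
  (forall u, 0 <= x u) -> 0 <= push f x v.
Proof. by move=> h; apply: sumr_ge0. Qed.

Lemma push_supp (U V : finType) (f : U -> V) x :
  (forall u, 0 <= x u) ->
  [set v | push f x v != 0] = f @: [set u | x u != 0].
Proof.
move=> h; apply/setP => v; rewrite inE /push psumr_neq0; last by move=> u _.
apply/hasP/imsetP.
  move=> [u _ /andP[/eqP <- hu]]; exists u => //.
  by rewrite inE; apply/negP => /eqP e; move: hu; rewrite e ltxx.
move=> [u]; rewrite inE => hu ->; exists u; first by rewrite mem_index_enum.
by rewrite eqxx /= lt_def hu h.
Qed.

Lemma push_dist (U V : finType) (f : U -> V) x y :
  dist1 (push f x) (push f y) <= dist1 x y.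
Proof.
rewrite /dist1 -(push_sumF f (fun u => `|x u - y u|)).
apply: ler_sum => v _; rewrite /push -sumrB.
exact: ler_norm_sum.
Qed.

Lemma real_ge0 (U : finType) (K : pred {set U}) x u :
  realization K x -> 0 <= x u.
Proof. by case. Qed.

Lemma real_le1 (U : finType) (K : pred {set U}) x u :
  realization K x -> x u <= 1.
Proof.
move=> [h [s _]]; rewrite -s (bigD1 u) //= lerDl.
by apply: sumr_ge0.
Qed.

Lemma real_push (U V : finType) (K : pred {set U}) (L : pred {set V}) (f : U -> V) x :
  (forall s, K s -> L (f @: s)) -> realization K x -> realization L (push f x).
Proof.
move=> hs [h0 [h1 hK]]; split; first by move=> v; apply: push_ge0.
split; first by rewrite /push push_sumF.
by rewrite push_supp //; apply: hs.
Qed.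

Lemma push_lip (U V : finType) (f : U -> V) x y v :
  `|push f x v - push f y v| <= dist1 x y.
Proof.
apply: le_trans (push_dist f x y); exact: dist1_coord.
Qed.

Lemma comb_bound (t s a b p q D : R) :
  0 <= t <= 1 -> 0 <= s <= 1 -> 0 <= a <= 1 -> 0 <= p <= 1 ->
  `|a - b| <= D -> `|p - q| <= D ->
  `|((1 - t) * a + t * p) - ((1 - s) * b + s * q)| <= 2 * (`|t - s| + D).
Proof.
move=> /andP[t0 t1] /andP[s0 s1] /andP[a0 a1] /andP[p0 p1] hab hpq.
have -> : (1 - t) * a + t * p - ((1 - s) * b + s * q) =
  ((s - t) * a + (1 - s) * (a - b)) + ((t - s) * p + s * (p - q)) by ring.
have e1 : `|(s - t) * a| <= `|t - s|.
  by rewrite normrM distrC ger0_norm // ler_piMr // normr_ge0.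
have e2 : `|(t - s) * p| <= `|t - s|.
  by rewrite normrM [`|p|]ger0_norm // ler_piMr // normr_ge0.
have e3 : `|(1 - s) * (a - b)| <= D.
  rewrite normrM ger0_norm; last by lra.
  apply: le_trans hab; rewrite ler_piMl; [by [] | exact: normr_ge0 | lra].
have e4 : `|s * (p - q)| <= D.
  rewrite normrM ger0_norm //.
  apply: le_trans hpq; rewrite ler_piMl //; exact: normr_ge0.
apply: le_trans (ler_normD _ _) _.
have := ler_normD ((s - t) * a) ((1 - s) * (a - b)).
have := ler_normD ((t - s) * p) (s * (p - q)).
lra.
Qed.

Lemma supp_comb (U : finType) (t : R) (a b : U -> R) :
  0 < t < 1 -> (forall u, 0 <= a u) -> (forall u, 0 <= b u) ->
  [set u | (1 - t) * a u + t * b u != 0] = [set u | b u != 0] :|: [set u | a u != 0].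
Proof.
move=> /andP[t0 t1] ha hb; apply/setP => u; rewrite !inE.
have h1 : 0 < 1 - t by lra.
rewrite paddr_eq0 ?mulr_ge0 //; last by apply: ltW.
  by rewrite !mulf_eq0 (gt_eqF h1) (gt_eqF t0) /= negb_and orbC.
by apply: ltW.
Qed.

Lemma vmap_homotopic (U V : finType) (K : pred {set U}) (L : pred {set V})
  (f : U -> V) (g : V -> U) :
  (forall s, K s -> L (f @: s)) -> (forall s, L s -> K (g @: s)) ->
  (forall s, K s -> K (s :|: g @: (f @: s))) ->
  homotopic (realization K) (realization K) (fun x => push g (push f x)) id.
Proof.
move=> hf hg hc.
pose H t x := fun u => (1 - t) * push g (push f x) u + t * x u.
apply: (@lip_homotopic _ _ _ _ _ _ H 2) => //.
- move=> t x /andP[t0 t1] Kx.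
  have Kgf := real_push hg (real_push hf Kx).
  have [x0 [x1 xK]] := Kx.
  have [y0 [y1 yK]] := Kgf.
  split; first by move=> u; rewrite /H addr_ge0 // mulr_ge0 //; lra.
  split.
    rewrite /H big_split /= -!mulr_sumr y1 x1; ring.
  have [->|tn0] := eqVneq t 0.
    suff -> : [set v | H 0 x v != 0] = [set v | push g (push f x) v != 0] by [].
    by apply/setP => v; rewrite !inE /H subr0 mul1r mul0r addr0.
  have [->|tn1] := eqVneq t 1.
    suff -> : [set v | H 1 x v != 0] = [set v | x v != 0] by [].
    by apply/setP => v; rewrite !inE /H subrr mul0r mul1r add0r.
  rewrite /H supp_comb //; last first.
    by apply/andP; split; rewrite lt_def ?tn0 ?t0 // eq_sym tn1.
  by rewrite !push_supp //; [apply: hc | move=> ?; apply: push_ge0].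
- by move=> x _; apply: functional_extensionality => u; rewrite /H subr0 mul1r mul0r addr0.
- by move=> x _; apply: functional_extensionality => u; rewrite /H subrr mul0r mul1r add0r.
move=> t s x y ht hs Kx Ky v; rewrite /H.
apply: comb_bound => //.
- have Kgf := real_push hg (real_push hf Kx).
  by rewrite (real_ge0 _ Kgf) (real_le1 _ Kgf).
- by rewrite (real_ge0 _ Kx) (real_le1 _ Kx).
- apply: le_trans (push_lip _ _ _ _) _; exact: push_dist.
- exact: dist1_coord.
Qed.

Lemma vmap_equiv (U V : finType) (K : pred {set U}) (L : pred {set V})
  (f : U -> V) (g : V -> U) :
  (forall s, K s -> L (f @: s)) -> (forall s, L s -> K (g @: s)) ->
  (forall s, K s -> K (s :|: g @: (f @: s))) ->
  (forall s, L s -> L (s :|: f @: (g @: s))) ->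
  homotopy_equiv (realization K) (realization L).
Proof.
move=> hf hg hcK hcL.
exists (push f), (push g); split; [split|split].
- by move=> x; apply: real_push.
- by apply: (@lip_cont _ _ _ _ 1) => // x y _ _ v; rewrite mul1r; apply: push_lip.
- by move=> x; apply: real_push.
- by apply: (@lip_cont _ _ _ _ 1) => // x y _ _ v; rewrite mul1r; apply: push_lip.
- exact: (vmap_homotopic hf hg hcK).
- exact: (vmap_homotopic hg hf hcL).
Qed.

Local Close Scope ring_scope.

Lemma indep_image (U V : finType) (a : rel U) (b : rel V) (W : pred U) (f : U -> V) :
  (forall x y, W x -> W y -> ~~ a x y -> ~~ b (f x) (f y)) ->
  forall s, indep_complex a s -> {subset s <= W} -> indep_complex b (f @: s).
Proof.
move=> h s /andP[s0 /forallP hs] sW; apply/andP; split.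
  by case/set0Pn: s0 => x xs; apply/set0Pn; exists (f x); apply: imset_f.
apply/forallP => z; apply/implyP => /imsetP[x xs ->].
apply/forallP => z'; apply/implyP => /imsetP[y ys ->].
apply: h; [exact: sW | exact: sW|].
by have /implyP/(_ xs)/forallP/(_ y)/implyP/(_ ys) := hs x.
Qed.

Lemma indep_contig (U : finType) (a : rel U) (W : pred U) (h : U -> U) :
  (forall x y, W x -> W y -> ~~ a x y ->
      [&& ~~ a x (h y), ~~ a (h x) y & ~~ a (h x) (h y)]) ->
  forall s, indep_complex a s -> {subset s <= W} -> indep_complex a (s :|: h @: s).
Proof.
move=> hc s /andP[s0 /forallP hs] sW; apply/andP; split.
  by case/set0Pn: s0 => x xs; apply/set0Pn; exists x; rewrite inE xs.
have na : forall x y, x \in s -> y \in s -> ~~ a x y.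
  by move=> x y xs ys; have /implyP/(_ xs)/forallP/(_ y)/implyP/(_ ys) := hs x.
apply/forallP => x; apply/implyP; rewrite inE => /orP[xs|/imsetP[x' xs ->]];
apply/forallP => y; apply/implyP; rewrite inE => /orP[ys|/imsetP[y' ys ->]].
- exact: na.
- by case/and3P: (hc x y' (sW _ xs) (sW _ ys) (na _ _ xs ys)).
- by case/and3P: (hc x' y (sW _ xs) (sW _ ys) (na _ _ xs ys)).
- by case/and3P: (hc x' y' (sW _ xs) (sW _ ys) (na _ _ xs ys)).
Qed.

Definition susp_adj (V : finType) (a : rel V) : rel (V + bool) := fun x y =>
  match x, y with
  | inl p, inl q => a p q
  | inr b, inr c => b != c
  | _, _ => false
  end.

Lemma card_bool_le1 (A : {set bool}) :
  (#|A| <= 1)%N = ~~ ((true \in A) && (false \in A)).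
Proof.
case: (boolP (true \in A)) => ht; case: (boolP (false \in A)) => hf /=.
- apply/negbTE; rewrite -ltnNge.
  have -> : A = [set: bool].
    by apply/setP => -[]; rewrite inE ?ht ?hf.
  by rewrite cardsT card_bool.
- have -> : A = [set true] by apply/setP => -[]; rewrite !inE ?ht ?hf ?(negbTE ht) ?(negbTE hf).
  by rewrite cards1.
- have -> : A = [set false] by apply/setP => -[]; rewrite !inE ?ht ?hf ?(negbTE ht) ?(negbTE hf).
  by rewrite cards1.
- have -> : A = set0 by apply/setP => -[]; rewrite !inE ?ht ?hf ?(negbTE ht) ?(negbTE hf).
  by rewrite cards0.
Qed.

Lemma susp_indep (V : finType) (a : rel V) (s : {set V + bool}) :
  susp (indep_complex a) s = indep_complex (susp_adj a) s.
Proof.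
rewrite /susp /indep_complex card_bool_le1 !inE.
case: (s != set0) => //=.
apply/idP/idP.
  move=> /andP[/orP[/eqP e0|/andP[_ /forallP hl]] hb].
    apply/forallP => -[x|bx]; apply/implyP => xs.
      have : x \in inl @^-1: s by rewrite inE.
      by rewrite e0 inE.
    apply/forallP => -[y|by_]; apply/implyP => ys //=.
    by case: bx xs; case: by_ ys => //= ys xs; move: hb; rewrite xs ys.
  apply/forallP => -[x|bx]; apply/implyP => xs.
    apply/forallP => -[y|by_]; apply/implyP => ys //=.
    have := hl x; rewrite inE xs /= => /forallP/(_ y); by rewrite inE ys.
  apply/forallP => -[y|by_]; apply/implyP => ys //=.
  by case: bx xs; case: by_ ys => //= ys xs; move: hb; rewrite xs ys.
move=> /forallP h; apply/andP; split.
  set L := inl @^-1: s; case: (L =P set0) => [->|/eqP ne] //=.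
  apply/forallP => x; apply/implyP; rewrite inE => xs.
  apply/forallP => y; apply/implyP; rewrite inE => ys.
  by have /implyP/(_ xs)/forallP/(_ (inl y))/implyP/(_ ys) := h (inl x).
apply/negP => /andP[ht hf].
by have /implyP/(_ ht)/forallP/(_ (inr false))/implyP/(_ hf) := h (inr true).
Qed.

Definition fA (p r : nat) (x : Hring_vert p.+4 r.+1) : ((H_vert p.+2 r.+1 + bool) + bool) :=
  match x with
  | inl (i, j) => if (i : nat) == 0 then (if (j : nat) == 0 then inl (inl (inr ord0)) else inl (inr true))
                  else if (i : nat) == p.+3 then (if (j:nat) == 1 then inl (inl (inr ord_max)) else inr true)
                  else inl (inl (inl (inord i.-1, j)))
  | inr e => if (e : nat) == 0 then inl (inr false) else if (e:nat) == 1 then inr false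
             else if (e : nat) == 2 then inl (inr true) else inr true
  end.

Definition gA (p r : nat) (z : ((H_vert p.+2 r.+1 + bool) + bool)) : Hring_vert p.+4 r.+1 :=
  match z with
  | inl (inl (inl (i, j))) => inl (inord i.+1, j)
  | inl (inl (inr e)) => if (e : nat) == 0 then inl (ord0, ord0) else inl (ord_max, inord 1)
  | inl (inr b) => if b then inr (inord 2) else inr ord0
  | inr b => if b then inr ord_max else inr (inord 1)
  end.

Lemma ordeqE n a b (ha : (a < n)%N) (hb : (b < n)%N) : (Ordinal ha == Ordinal hb) = (a == b).
Proof. by []. Qed.

Lemma ordeqV n (x y : 'I_n) : (x == y) = (nat_of_ord x == nat_of_ord y).
Proof. by []. Qed.

Ltac crunch := rewrite /= /grid_adj /ext_adj /extra_adj /= ?ordeqV ?inordK /=;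
  repeat (rewrite ?ordeqV ?inordK /=; [case: ifP => /= ? | idtac ..]);
  rewrite /grid_adj /ext_adj /extra_adj /= ?ordeqV ?inordK /=; try lia.

Lemma fA_simpl (p r : nat) x y : (2 <= r)%N -> ~~ Hring_adj x y ->
  ~~ susp_adj (susp_adj (@H_adj p.+2 r.+1)) (fA x) (fA y).
Proof.
move=> hr.
case: x => [[[i hi] [j hj]] | [e he]]; case: y => [[[i' hi'] [j' hj']] | [e' he']];
rewrite /fA /= /grid_adj /ext_adj /extra_adj /=;
repeat (case: ifP => /= ?); rewrite /grid_adj /ext_adj /extra_adj /= ?ordeqV ?inordK /=; try lia.
Qed.

Lemma gA_simpl (p r : nat) z z' : (2 <= r)%N -> ~~ susp_adj (susp_adj (@H_adj p.+2 r.+1)) z z' ->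
  ~~ Hring_adj (gA z) (gA z').
Proof.
move=> hr.
case: z => [[[[[i hi] [j hj]] | [e he]] | b] | b];
case: z' => [[[[[i' hi'] [j' hj']] | [e' he']] | b'] | b'];
rewrite /gA; crunch.
Qed.

Lemma hA_contig (p r : nat) (x y : Hring_vert p.+4 r.+1) : (2 <= r)%N -> ~~ Hring_adj x y ->
  [&& ~~ Hring_adj x (gA (fA y)), ~~ Hring_adj (gA (fA x)) y &
      ~~ Hring_adj (gA (fA x)) (gA (fA y))] :> bool.
Proof.
move=> hr.
case: x => [[[i hi] [j hj]] | [e he]]; case: y => [[[i' hi'] [j' hj']] | [e' he']];
rewrite /fA; crunch; rewrite /gA; crunch.
Qed.

Lemma kA_contig (p r : nat) (z z' : ((H_vert p.+2 r.+1 + bool) + bool)) : (2 <= r)%N ->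
  ~~ susp_adj (susp_adj (@H_adj p.+2 r.+1)) z z' ->
  [&& ~~ susp_adj (susp_adj (@H_adj p.+2 r.+1)) z (fA (gA z')),
      ~~ susp_adj (susp_adj (@H_adj p.+2 r.+1)) (fA (gA z)) z' &
      ~~ susp_adj (susp_adj (@H_adj p.+2 r.+1)) (fA (gA z)) (fA (gA z'))] :> bool.
Proof.
move=> hr.
case: z => [[[[[i hi] [j hj]] | [e he]] | b] | b];
case: z' => [[[[[i' hi'] [j' hj']] | [e' he']] | b'] | b'];
rewrite /gA; crunch; rewrite /fA; crunch.
Qed.

Local Open Scope ring_scope.

Lemma absB_le (a b : R) : `|a| - `|b| <= `|a - b|.
Proof. by rewrite lerBlDr; apply: le_trans (ler_normD _ _); rewrite subrK. Qed.

Lemma norm_step (u u' N N' Q Q' D E c : R) :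
  0 < c -> c <= N -> c <= N' -> N ^+ 2 = Q -> N' ^+ 2 = Q' ->
  `|u - u'| <= D -> `|u'| <= 1 -> `|Q - Q'| <= E ->
  `|u / N - u' / N'| <= D / c + E / (2 * c ^+ 3).
Proof.
move=> c0 cN cN' hQ hQ' hu hu' hE.
have N0 : 0 < N by apply: lt_le_trans cN.
have N0' : 0 < N' by apply: lt_le_trans cN'.
have hNN : `|N - N'| * (2 * c) <= E.
  apply: le_trans hE.
  have -> : Q - Q' = (N - N') * (N + N') by rewrite -hQ -hQ'; ring.
  rewrite normrM [`|N + N'|]ger0_norm; last lra.
  by rewrite ler_wpM2l //; lra.
have -> : u / N - u' / N' = (u - u') / N + u' * (N' - N) / (N * N').
  by field; apply/andP; split; rewrite gt_eqF.
have E0 : 0 <= E by apply: le_trans hE; exact: normr_ge0.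
have hNN' : `|N' - N| <= E / (2 * c) by rewrite distrC ler_pdivlMr //; lra.
apply: le_trans (ler_normD _ _) _; apply: lerD.
  rewrite normrM normfV (gtr0_norm N0).
  apply: ler_pM => //; first by rewrite invr_ge0; apply: ltW.
  by rewrite lef_pV2 // posrE.
have -> : E / (2 * c ^+ 3) = 1 * (E / (2 * c)) * (c * c)^-1.
  by field; rewrite gt_eqF.
rewrite normrM normfV normrM (gtr0_norm (mulr_gt0 N0 N0')).
apply: ler_pM.
- by rewrite mulr_ge0 // normr_ge0.
- by rewrite invr_ge0 mulr_ge0 // ltW.
- apply: ler_pM => //; exact: normr_ge0.
rewrite lef_pV2 ?posrE ?mulr_gt0 //.
by apply: ler_pM => //; apply: ltW.
Qed.

Definition cross_adj (d : nat) : rel ('I_d.+1 * bool) :=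
  fun p q => (p.1 == q.1) && (p.2 != q.2).
Definition Cross (d : nat) := indep_complex (@cross_adj d).
Definition yv (d : nat) (x : 'I_d.+1 * bool -> R) (i : 'I_d.+1) : R :=
  x (i, true) - x (i, false).
Definition sq (d : nat) (y : 'I_d.+1 -> R) : R := \sum_i y i ^+ 2.
Definition toS (d : nat) (x : 'I_d.+1 * bool -> R) : 'I_d.+1 -> R :=
  fun i => yv x i / Num.sqrt (sq (yv x)).
Definition posr (a : R) : R := if a < 0 then 0 else a.
Definition fromS (d : nat) (z : 'I_d.+1 -> R) : 'I_d.+1 * bool -> R :=
  fun p => (if p.2 then posr (z p.1) else posr (- z p.1)) / \sum_i `|z i|.

Lemma sum_pair (d : nat) (F : 'I_d.+1 * bool -> R) :
  \sum_p F p = \sum_i (F (i, true) + F (i, false)).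
Proof.
transitivity (\sum_i \sum_b F (i, b)).
  by rewrite pair_big; apply: eq_big => // -[].
by apply: eq_bigr => i _; rewrite big_bool.
Qed.

Lemma cross_zero (d : nat) (x : 'I_d.+1 * bool -> R) i :
  realization (@Cross d) x -> x (i, true) = 0 \/ x (i, false) = 0.
Proof.
move=> [_ [_ /andP[_ /forallP h]]].
case: (eqVneq (x (i, true)) 0) => [->|ht]; first by left.
case: (eqVneq (x (i, false)) 0) => [->|hf]; first by right.
have := h (i, true); rewrite inE ht /= => /forallP/(_ (i, false)).
by rewrite inE hf /= /cross_adj /= eqxx.
Qed.

Lemma abs_yv (d : nat) (x : 'I_d.+1 * bool -> R) i :
  realization (@Cross d) x -> `|yv x i| = x (i, true) + x (i, false).
Proof.
move=> Kx; have h0 := real_ge0 _ Kx.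
rewrite /yv; case: (cross_zero i Kx) => ->.
  by rewrite sub0r normrN add0r ger0_norm.
by rewrite subr0 addr0 ger0_norm.
Qed.

Lemma sum_abs_yv (d : nat) (x : 'I_d.+1 * bool -> R) :
  realization (@Cross d) x -> \sum_i `|yv x i| = 1.
Proof.
move=> Kx; have [_ [s1 _]] := Kx; rewrite -s1 sum_pair.
by apply: eq_bigr => i _; rewrite abs_yv.
Qed.

Lemma yv_le1 (d : nat) (x : 'I_d.+1 * bool -> R) i :
  realization (@Cross d) x -> `|yv x i| <= 1.
Proof.
move=> Kx; rewrite -(sum_abs_yv Kx) (bigD1 i) //= lerDl.
by apply: sumr_ge0 => j _.
Qed.

Lemma yv_big (d : nat) (x : 'I_d.+1 * bool -> R) :
  realization (@Cross d) x -> exists i, (d.+1%:R)^-1 <= `|yv x i|.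
Proof.
move=> Kx; case: (boolP [exists i, (d.+1%:R)^-1 <= `|yv x i|]) => [/existsP //|/existsPn h].
exfalso.
have : \sum_(i < d.+1) `|yv x i| < \sum_(i < d.+1) (d.+1%:R)^-1.
  apply: ltr_sum; first by apply/hasP; exists ord0; rewrite ?mem_index_enum.
  by move=> i _; rewrite ltNge; apply: h.
  rewrite sum_abs_yv // sumr_const card_ord.
  have hc : (d.+1%:R : R) * (d.+1%:R)^-1 = 1 by rewrite mulfV // pnatr_eq0.
  set c := (d.+1%:R : R)^-1 in hc *.
  by rewrite -mulr_natl hc ltxx.
Qed.

Lemma sq_big (d : nat) (x : 'I_d.+1 * bool -> R) :
  realization (@Cross d) x -> ((d.+1%:R)^-1) ^+ 2 <= sq (yv x).
Proof.
move=> Kx; have [i hi] := yv_big Kx.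
rewrite /sq (bigD1 i) //=.
apply: le_trans (_ : _ <= yv x i ^+ 2) _; last first.
  by rewrite lerDl; apply: sumr_ge0 => j _; apply: sqr_ge0.
rewrite -[yv x i ^+ 2]real_normK ?num_real //.
by rewrite ler_sqr // ?nnegrE ?invr_ge0 ?ler0n ?normr_ge0.
Qed.

Lemma sq_pos (d : nat) (x : 'I_d.+1 * bool -> R) :
  realization (@Cross d) x -> 0 < sq (yv x).
Proof.
move=> Kx; apply: lt_le_trans (sq_big Kx).
by rewrite exprn_gt0 // invr_gt0 ltr0n.
Qed.

Lemma sqrt_big (d : nat) (x : 'I_d.+1 * bool -> R) :
  realization (@Cross d) x -> (d.+1%:R)^-1 <= Num.sqrt (sq (yv x)).
Proof.
move=> Kx; rewrite -ler_sqr ?nnegrE ?sqrtr_ge0 ?invr_ge0 ?ler0n //.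
rewrite sqr_sqrtr; first exact: sq_big.
exact: ltW (sq_pos Kx).
Qed.

Lemma toS_sphere (d : nat) : maps_into (realization (@Cross d)) (@sphere d) (@toS d).
Proof.
move=> x Kx; rewrite /sphere /toS.
under eq_bigr do rewrite expr_div_n.
rewrite -mulr_suml sqr_sqrtr; last exact: ltW (sq_pos Kx).
by rewrite mulfV // gt_eqF // sq_pos.
Qed.

Lemma yv_dist (d : nat) (x x' : 'I_d.+1 * bool -> R) i :
  `|yv x i - yv x' i| <= 2 * dist1 x x'.
Proof.
have -> : yv x i - yv x' i = (x (i, true) - x' (i, true)) - (x (i, false) - x' (i, false)).
  by rewrite /yv; ring.
apply: le_trans (ler_normB _ _) _.
have := dist1_coord x x' (i, true); have := dist1_coord x x' (i, false); lra.
Qed.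

Lemma sq_dist (d : nat) (y y' : 'I_d.+1 -> R) D :
  (forall i, `|y i| <= 1) -> (forall i, `|y' i| <= 1) ->
  (forall i, `|y i - y' i| <= D) ->
  `|sq y - sq y'| <= d.+1%:R * (2 * D).
Proof.
move=> h h' hD; rewrite /sq -sumrB.
apply: le_trans (ler_norm_sum _ _ _) _.
have -> : d.+1%:R * (2 * D) = \sum_(i < d.+1) (2 * D).
  by rewrite sumr_const card_ord mulr_natl.
apply: ler_sum => i _.
have -> : y i ^+ 2 - y' i ^+ 2 = (y i - y' i) * (y i + y' i) by ring.
rewrite normrM mulrC.
apply: ler_pM; [exact: normr_ge0 | exact: normr_ge0 | | exact: hD].
apply: le_trans (ler_normD _ _) _; have := h i; have := h' i; lra.
Qed.

Lemma toS_lip (d : nat) (x x' : 'I_d.+1 * bool -> R) i :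
  realization (@Cross d) x -> realization (@Cross d) x' ->
  `|toS x i - toS x' i| <=
     (2 * d.+1%:R + 2 * d.+1%:R * d.+1%:R ^+ 3) * dist1 x x'.
Proof.
move=> Kx Kx'.
have c0 : 0 < (d.+1%:R : R)^-1 by rewrite invr_gt0 ltr0n.
have := @norm_step (yv x i) (yv x' i) (Num.sqrt (sq (yv x))) (Num.sqrt (sq (yv x')))
  (sq (yv x)) (sq (yv x')) (2 * dist1 x x') (d.+1%:R * (2 * (2 * dist1 x x')))
  ((d.+1%:R)^-1) c0 (sqrt_big Kx) (sqrt_big Kx').
rewrite !sqr_sqrtr; try exact: ltW (sq_pos _).
move=> /(_ erefl erefl (yv_dist _ _ _) (yv_le1 _ Kx')).
move=> /(_ (sq_dist (fun j => yv_le1 j Kx) (fun j => yv_le1 j Kx') (fun j => yv_dist x x' j))).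
rewrite /toS => h; apply: le_trans h _.
have hn : (d.+1%:R : R) != 0 by rewrite pnatr_eq0.
rewrite le_eqVlt; apply/orP; left; apply/eqP; field.
by rewrite -natr1 addrC in hn.
Qed.

Lemma posr_ge0 a : 0 <= posr a.
Proof. by rewrite /posr; case: ifP => // /negbT; rewrite -leNgt. Qed.

Lemma posr_le a : posr a <= `|a|.
Proof. rewrite /posr; case: ifP => h; first exact: normr_ge0. exact: ler_norm. Qed.

Lemma posr_sum a : posr a + posr (- a) = `|a|.
Proof.
rewrite /posr oppr_lt0; case: (ltrgtP a 0) => h.
- by rewrite add0r ltr0_norm.
- by rewrite addr0 gtr0_norm.
- by rewrite h oppr0 addr0 normr0.
Qed.

Lemma posr_diff a : posr a - posr (- a) = a.
Proof.
rewrite /posr oppr_lt0; case: (ltrgtP a 0) => h.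
- by rewrite sub0r opprK.
- by rewrite subr0.
- by rewrite h oppr0 subr0.
Qed.

Lemma posr_both a : posr a != 0 -> posr (- a) != 0 -> False.
Proof.
rewrite /posr oppr_lt0; case: (ltrgtP a 0) => h; rewrite ?eqxx //.
by rewrite h oppr0 eqxx.
Qed.

Lemma posr_lip a b : `|posr a - posr b| <= `|a - b|.
Proof.
rewrite /posr; case: ifP => ha; case: ifP => hb.
- by rewrite subrr normr0 normr_ge0.
- rewrite sub0r normrN; move/negbT: hb; rewrite -leNgt => hb.
  rewrite ger0_norm // ler_normr; apply/orP; right; lra.
- rewrite subr0; move/negbT: ha; rewrite -leNgt => ha.
  rewrite ger0_norm // ler_normr; apply/orP; left; lra.
- by [].
Qed.

Lemma sphere_le1 (d : nat) (z : 'I_d.+1 -> R) i : sphere z -> `|z i| <= 1.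
Proof.
move=> hz.
have : z i ^+ 2 <= 1.
  rewrite -hz (bigD1 i) //= lerDl; apply: sumr_ge0 => j _; exact: sqr_ge0.
rewrite -real_normK ?num_real // => h.
rewrite leNgt; apply/negP => h1.
have : 1 < `|z i| ^+ 2 by rewrite -[1](expr1n _ 2) ltr_pXn2r ?nnegrE ?ler01 ?normr_ge0.
lra.
Qed.

Lemma sphere_S (d : nat) (z : 'I_d.+1 -> R) : sphere z -> 1 <= \sum_i `|z i|.
Proof.
move=> hz; rewrite -{1}hz; apply: ler_sum => i _.
rewrite -real_normK ?num_real // expr2.
apply: ler_piMl; [exact: normr_ge0 | exact: sphere_le1].
Qed.

Lemma sum1_supp (U : finType) (x : U -> R) : \sum_u x u = 1 -> [set u | x u != 0] != set0.
Proof.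
move=> h; apply/negP => /eqP e.
have : \sum_u x u = 0.
  apply: big1 => u _; apply/eqP; apply: contraT => hu.
  have : u \in [set u | x u != 0] by rewrite inE.
  by rewrite e inE.
by rewrite h => /eqP; rewrite oner_eq0.
Qed.

Lemma fromS_real (d : nat) : maps_into (@sphere d) (realization (@Cross d)) (@fromS d).
Proof.
move=> z hz; have S1 := sphere_S hz.
have S0 : 0 < \sum_i `|z i| by lra.
have hsum : \sum_p fromS z p = 1.
  rewrite sum_pair /fromS /= -(mulfV (lt0r_neq0 S0)) mulr_suml.
  by apply: eq_bigr => i _; rewrite -mulrDl posr_sum.
split; first by move=> -[i []]; rewrite /fromS /= divr_ge0 ?posr_ge0 // ltW.
split => //; apply/andP; split; first exact: sum1_supp.
apply/forallP => -[i b]; apply/implyP; rewrite inE => hp.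
apply/forallP => -[j c]; apply/implyP; rewrite inE => hq.
rewrite /cross_adj /=; apply/negP => /andP[/eqP eij hbc].
subst j; move: hp hq; rewrite /fromS /= !mulf_eq0 !negb_or => /andP[hp _] /andP[hq _].
by case: b c hbc hp hq => [] [] //= _ hp hq; [exact: (posr_both hp hq) | exact: (posr_both hq hp)].
Qed.

Lemma fromS_lip (d : nat) (z z' : 'I_d.+1 -> R) p :
  sphere z -> sphere z' -> `|fromS z p - fromS z' p| <= 2 * dist1 z z'.
Proof.
move=> hz hz'.
have S1 := sphere_S hz; have S1' := sphere_S hz'.
set S := \sum_i `|z i| in S1 *; set S' := \sum_i `|z' i| in S1' *.
have hSS : `|S - S'| <= dist1 z z'.
  rewrite /S /S' -sumrB; apply: le_trans (ler_norm_sum _ _ _) _.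
  by apply: ler_sum => i _; apply: ler_dist_dist.
set P := (if p.2 then posr (z p.1) else posr (- z p.1)).
set P' := (if p.2 then posr (z' p.1) else posr (- z' p.1)).
have hPP : `|P - P'| <= dist1 z z'.
  apply: le_trans (dist1_coord _ _ p.1); rewrite /P /P'; case: p.2; first exact: posr_lip.
  by apply: le_trans (posr_lip _ _) _; rewrite -opprD normrN.
have P'1 : 0 <= P' <= 1.
  rewrite /P'; case: p.2; rewrite posr_ge0 /=; apply: le_trans (posr_le _) _;
  rewrite ?normrN; exact: sphere_le1.
have -> : fromS z p - fromS z' p = (P - P') / S + P' * (S' - S) / (S * S').
  rewrite /fromS -/P -/P' -/S -/S'; field; apply/andP; split; rewrite gt_eqF //; lra.
apply: le_trans (ler_normD _ _) _.
have e1 : `|(P - P') / S| <= dist1 z z'.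
  rewrite normrM normfV (ger0_norm (_ : 0 <= S)); last lra.
  rewrite ler_pdivrMr; last lra.
  by apply: le_trans hPP _; rewrite ler_peMr ?dist1_ge0.
have e2 : `|P' * (S' - S) / (S * S')| <= dist1 z z'.
  rewrite normrM normfV normrM (ger0_norm (_ : 0 <= S * S')); last by rewrite mulr_ge0 //; lra.
  rewrite ler_pdivrMr; last by rewrite mulr_gt0 //; lra.
  rewrite distrC.
  apply: le_trans (_ : 1 * dist1 z z' <= _); last first.
    have h11 : 1 <= S * S' by rewrite -[1]mulr1; apply: ler_pM => //; lra.
    have := dist1_ge0 z z'; nra.
  rewrite mul1r; apply: le_trans (_ : 1 * `|S - S'| <= _); last by rewrite mul1r.
  rewrite mul1r ler_piMl //; by case/andP: P'1 => ? ?; rewrite ger0_norm.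
lra.
Qed.

Lemma posr_scale a c : 0 < c -> posr (a / c) = posr a / c.
Proof.
move=> c0; rewrite /posr pmulr_llt0 ?invr_gt0 //.
by case: ifP => _; rewrite ?mul0r.
Qed.

Lemma posr_pos a : 0 <= a -> posr a = a.
Proof. by move=> h; rewrite /posr ltNge h. Qed.

Lemma posr_neg a : 0 <= a -> posr (- a) = 0.
Proof.
move=> h; rewrite /posr oppr_lt0; case: ifP => // /negbT; rewrite -leNgt => h'.
have -> : a = 0 by apply/eqP; rewrite eq_le h' h.
by rewrite oppr0.
Qed.

Lemma fromS_toS (d : nat) (x : 'I_d.+1 * bool -> R) :
  realization (@Cross d) x -> fromS (toS x) = x.
Proof.
move=> Kx; apply: functional_extensionality => -[i b].
have Q0 := sq_pos Kx.
have N0 : 0 < Num.sqrt (sq (yv x)) by rewrite sqrtr_gt0.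
set N := Num.sqrt (sq (yv x)) in N0 *.
have hS : \sum_j `|toS x j| = N^-1.
  rewrite /toS -/N.
  under eq_bigr do rewrite normrM normfV (gtr0_norm N0).
  by rewrite -mulr_suml sum_abs_yv // mul1r.
rewrite /fromS hS /= /toS -/N.
have h0 := real_ge0 _ Kx.
case: b => /=; rewrite -?mulNr posr_scale // invrK divfK ?gt_eqF // /yv;
  case: (cross_zero i Kx) => ->.
- by rewrite sub0r posr_neg.
- by rewrite subr0 posr_pos.
- by rewrite sub0r opprK posr_pos.
- by rewrite subr0 posr_neg.
Qed.

Lemma toS_fromS (d : nat) (z : 'I_d.+1 -> R) :
  sphere z -> toS (fromS z) = z.
Proof.
move=> hz; apply: functional_extensionality => i.
have S1 := sphere_S hz.
have S0 : 0 < \sum_j `|z j| by lra.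
set S := \sum_j `|z j| in S0 S1 *.
have hy : forall j, yv (fromS z) j = z j / S.
  by move=> j; rewrite /yv /fromS /= -/S -mulrBl posr_diff.
rewrite /toS hy.
have -> : sq (yv (fromS z)) = (S^-1) ^+ 2.
  rewrite /sq; under eq_bigr do rewrite hy expr_div_n.
  by rewrite -mulr_suml hz mul1r exprVn.
rewrite sqrtr_sqr ger0_norm ?invr_ge0 ?ltW // invrK divfK //.
by rewrite gt_eqF.
Qed.

Lemma cross_sphere (d : nat) : homotopy_equiv (realization (@Cross d)) (@sphere d).
Proof.
exists (@toS d), (@fromS d); split; [split|split].
- exact: toS_sphere.
- apply: (@lip_cont _ _ _ _ (2 * d.+1%:R + 2 * d.+1%:R * d.+1%:R ^+ 3)).
    by rewrite addr_ge0 // !mulr_ge0 // ?exprn_ge0 ?ler0n.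
  by move=> x y Kx Ky v; apply: toS_lip.
- exact: fromS_real.
- apply: (@lip_cont _ _ _ _ 2) => //.
  by move=> x y Kx Ky v; apply: fromS_lip.
- apply: (@lip_homotopic _ _ _ _ _ _ (fun t x => x) 1) => //.
  + by move=> x Kx; rewrite fromS_toS.
  + move=> t s x y _ _ _ _ v; rewrite mul1r.
    apply: le_trans (dist1_coord x y v) _; rewrite lerDr; exact: normr_ge0.
- apply: (@lip_homotopic _ _ _ _ _ _ (fun t x => x) 1) => //.
  + by move=> x Kx; rewrite toS_fromS.
  + move=> t s x y _ _ _ _ v; rewrite mul1r.
    apply: le_trans (dist1_coord x y v) _; rewrite lerDr; exact: normr_ge0.
Qed.

Local Close Scope ring_scope.

Ltac crunch2 := rewrite /= /grid_adj /ext_adj /extra_adj /cross_adj /= ?ordeqV ?inordK /=;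
  repeat (rewrite ?ordeqV ?inordK /=; [case: ifP => /= ? | idtac ..]);
  rewrite /grid_adj /ext_adj /extra_adj /cross_adj /= ?ordeqV ?inordK /=; try lia.

Definition f2 (r : nat) (x : Hring_vert 2 r.+1) : 'I_3 * bool :=
  match x with
  | inl (i, j) => if (i : nat) == 0 then (if (j : nat) == 0 then (inord 0, true) else (inord 1, true))
                  else (if (j : nat) == 1 then (inord 0, false) else (inord 2, true))
  | inr e => if (e : nat) == 0 then (inord 1, false) else if (e : nat) == 1 then (inord 2, false)
             else if (e : nat) == 2 then (inord 1, true) else (inord 2, true)
  end.

Definition g2 (r : nat) (z : 'I_3 * bool) : Hring_vert 2 r.+1 :=
  let: (i, b) := z in
  if (i : nat) == 0 then (if b then inl (ord0, ord0) else inl (ord_max, inord 1))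
  else if (i : nat) == 1 then (if b then inr (inord 2) else inr (inord 0))
  else (if b then inr (inord 3) else inr (inord 1)).

Lemma f2_simpl (r : nat) (x y : Hring_vert 2 r.+1) : (2 <= r)%N -> ~~ Hring_adj x y ->
  ~~ cross_adj (f2 x) (f2 y).
Proof.
move=> hr.
case: x => [[[i hi] [j hj]] | [e he]]; case: y => [[[i' hi'] [j' hj']] | [e' he']];
rewrite /f2; crunch2.
Qed.

Lemma g2_simpl (r : nat) (z z' : 'I_3 * bool) : (2 <= r)%N -> ~~ cross_adj z z' ->
  ~~ Hring_adj (g2 r z) (g2 r z').
Proof.
move=> hr.
case: z => [[i hi] []]; case: z' => [[i' hi'] []]; rewrite /g2; crunch2.
Qed.

Lemma h2_contig (r : nat) (x y : Hring_vert 2 r.+1) : (2 <= r)%N -> ~~ Hring_adj x y ->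
  [&& ~~ Hring_adj x (g2 r (f2 y)), ~~ Hring_adj (g2 r (f2 x)) y &
      ~~ Hring_adj (g2 r (f2 x)) (g2 r (f2 y))] :> bool.
Proof.
move=> hr.
case: x => [[[i hi] [j hj]] | [e he]]; case: y => [[[i' hi'] [j' hj']] | [e' he']];
rewrite /f2; crunch2; rewrite /g2; crunch2.
Qed.

Lemma k2_contig (r : nat) (z z' : 'I_3 * bool) : (2 <= r)%N -> ~~ cross_adj z z' ->
  [&& ~~ cross_adj z (f2 (g2 r z')), ~~ cross_adj (f2 (g2 r z)) z' &
      ~~ cross_adj (f2 (g2 r z)) (f2 (g2 r z'))] :> bool.
Proof.
move=> hr.
case: z => [[i hi] []]; case: z' => [[i' hi'] []]; rewrite /g2; crunch2; rewrite /f2; crunch2.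
Qed.

Definition W3 (r : nat) (x : Hring_vert 3 r.+1) : bool :=
  match x with
  | inl (i, j) => [|| (i : nat) == 1, ((i : nat) == 0) && ((j : nat) == 0) |
                     ((i : nat) == 2) && ((j : nat) == 1)]
  | inr _ => true
  end.

Definition f31 (r : nat) (x : Hring_vert 3 r.+1) : Hring_vert 3 r.+1 :=
  match x with
  | inl (i, j) => if ((i : nat) == 0) && ((j : nat) != 0) then inr (inord 2)
                  else if ((i : nat) == 2) && ((j : nat) != 1) then inr (inord 3)
                  else inl (i, j)
  | inr e => inr e
  end.

Lemma f31_simpl (r : nat) (x y : Hring_vert 3 r.+1) : (2 <= r)%N -> ~~ Hring_adj x y ->
  ~~ Hring_adj (f31 x) (f31 y).
Proof.
move=> hr.
case: x => [[[i hi] [j hj]] | [e he]]; case: y => [[[i' hi'] [j' hj']] | [e' he']];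
rewrite /f31; crunch2.
Qed.

Lemma f31_W (r : nat) (x : Hring_vert 3 r.+1) : W3 (f31 x).
Proof.
case: x => [[[i hi] [j hj]] | [e he]]; rewrite /f31 /W3; crunch2.
Qed.

Lemma h31_contig (r : nat) (x y : Hring_vert 3 r.+1) : (2 <= r)%N -> ~~ Hring_adj x y ->
  [&& ~~ Hring_adj x (id (f31 y)), ~~ Hring_adj (id (f31 x)) y &
      ~~ Hring_adj (id (f31 x)) (id (f31 y))] :> bool.
Proof.
move=> hr.
case: x => [[[i hi] [j hj]] | [e he]]; case: y => [[[i' hi'] [j' hj']] | [e' he']];
rewrite /f31 /id; crunch2.
Qed.

Definition f32 (r : nat) (x : Hring_vert 3 r.+1) : 'I_4 * bool :=
  match x with
  | inl (i, j) => if (i : nat) == 0 then (inord 0, true)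
                  else if (i : nat) == 2 then (inord 1, false)
                  else (if (j : nat) == 1 then (inord 0, false) else (inord 1, true))
  | inr e => if (e : nat) == 0 then (inord 2, false) else if (e : nat) == 1 then (inord 3, false)
             else if (e : nat) == 2 then (inord 2, true) else (inord 3, true)
  end.

Definition g32 (r : nat) (z : 'I_4 * bool) : Hring_vert 3 r.+1 :=
  let: (i, b) := z in
  if (i : nat) == 0 then (if b then inl (inord 0, inord 0) else inl (inord 1, inord 1))
  else if (i : nat) == 1 then (if b then inl (inord 1, inord 0) else inl (inord 2, inord 1))
  else if (i : nat) == 2 then (if b then inr (inord 2) else inr (inord 0))
  else (if b then inr (inord 3) else inr (inord 1)).

Lemma f32_simpl (r : nat) (x y : Hring_vert 3 r.+1) : (2 <= r)%N -> W3 x -> W3 y ->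
  ~~ Hring_adj x y -> ~~ cross_adj (f32 x) (f32 y).
Proof.
move=> hr.
case: x => [[[i hi] [j hj]] | [e he]]; case: y => [[[i' hi'] [j' hj']] | [e' he']];
rewrite /f32 /W3; crunch2.
Qed.

Lemma g32_simpl (r : nat) (z z' : 'I_4 * bool) : (2 <= r)%N -> ~~ cross_adj z z' ->
  ~~ Hring_adj (g32 r z) (g32 r z').
Proof.
move=> hr.
case: z => [[i hi] []]; case: z' => [[i' hi'] []]; rewrite /g32; crunch2.
Qed.

Lemma g32_W (r : nat) (z : 'I_4 * bool) : (2 <= r)%N -> W3 (g32 r z).
Proof.
move=> hr; case: z => [[i hi] []]; rewrite /g32; crunch2; rewrite /W3; crunch2.
Qed.

Lemma h32_contig (r : nat) (x y : Hring_vert 3 r.+1) : (2 <= r)%N -> W3 x -> W3 y ->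
  ~~ Hring_adj x y ->
  [&& ~~ Hring_adj x (g32 r (f32 y)), ~~ Hring_adj (g32 r (f32 x)) y &
      ~~ Hring_adj (g32 r (f32 x)) (g32 r (f32 y))] :> bool.
Proof.
move=> hr.
case: x => [[[i hi] [j hj]] | [e he]]; case: y => [[[i' hi'] [j' hj']] | [e' he']];
rewrite /f32 /W3; crunch2; rewrite /g32; crunch2.
Qed.

Lemma k32_contig (r : nat) (z z' : 'I_4 * bool) : (2 <= r)%N -> ~~ cross_adj z z' ->
  [&& ~~ cross_adj z (f32 (g32 r z')), ~~ cross_adj (f32 (g32 r z)) z' &
      ~~ cross_adj (f32 (g32 r z)) (f32 (g32 r z'))] :> bool.
Proof.
move=> hr.
case: z => [[i hi] []]; case: z' => [[i' hi'] []]; rewrite /g32; crunch2; rewrite /f32; crunch2.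
Qed.

Definition indepW (U : finType) (a : rel U) (W : pred U) : pred {set U} :=
  fun s => indep_complex a s && [forall x in s, W x].

Lemma forall_subset (U : finType) (W : pred U) (s : {set U}) :
  [forall x in s, W x] -> {subset s <= W}.
Proof. by move=> /forallP h x xs; have /implyP := h x; apply. Qed.

Lemma indep_imageT (U V : finType) (a : rel U) (b : rel V) (f : U -> V) :
  (forall x y, ~~ a x y -> ~~ b (f x) (f y)) ->
  forall s, indep_complex a s -> indep_complex b (f @: s).
Proof. by move=> h s Ks; apply: (@indep_image _ _ a b predT f _ s Ks) => // x y _ _; apply: h. Qed.

Lemma indep_contigT (U : finType) (a : rel U) (h : U -> U) :
  (forall x y, ~~ a x y ->
      [&& ~~ a x (h y), ~~ a (h x) y & ~~ a (h x) (h y)]) ->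
  forall s, indep_complex a s -> indep_complex a (s :|: h @: s).
Proof. by move=> hc s Ks; apply: (@indep_contig _ a predT h _ s Ks) => // x y _ _; apply: hc. Qed.

Lemma case_k2 (r : nat) : (2 <= r)%N -> homotopy_equiv (@I_Hring 2 r.+1) (@sphere 2).
Proof.
move=> hr; apply: homotopy_equiv_trans (cross_sphere 2).
apply: (vmap_equiv (f := @f2 r) (g := g2 r)).
- move=> s Ks; exact: (indep_imageT (fun x y => @f2_simpl r x y hr) Ks).
- move=> s Ks; exact: (indep_imageT (fun x y => @g2_simpl r x y hr) Ks).
- move=> s Ks; rewrite -imset_comp.
  exact: (indep_contigT (fun x y => @h2_contig r x y hr) Ks).
- move=> s Ks; rewrite -imset_comp.
  exact: (indep_contigT (fun x y => @k2_contig r x y hr) Ks).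
Qed.

Lemma case_k3 (r : nat) : (2 <= r)%N -> homotopy_equiv (@I_Hring 3 r.+1) (@sphere 3).
Proof.
move=> hr; apply: homotopy_equiv_trans (cross_sphere 3).
apply: (@homotopy_equiv_trans _ _ _ _ (realization (indepW (@Hring_adj 3 r.+1) (@W3 r)))).
  apply: (vmap_equiv (f := @f31 r) (g := fun x => x)).
  - move=> s Ks; apply/andP; split.
      exact: (indep_imageT (fun x y => @f31_simpl r x y hr) Ks).
    by apply/forallP => z; apply/implyP => /imsetP[x _ ->]; apply: f31_W.
  - by move=> s /andP[Ks _]; rewrite imset_id.
  - move=> s Ks; rewrite -imset_comp.
    exact: (indep_contigT (fun x y => @h31_contig r x y hr) Ks).
  - move=> s /andP[Ks /forall_subset sW]; rewrite imset_id; apply/andP; split.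
      exact: (indep_contigT (fun x y => @h31_contig r x y hr) Ks).
    apply/forallP => z; apply/implyP; rewrite inE => /orP[/sW //|/imsetP[x _ ->]].
    exact: f31_W.
apply: (vmap_equiv (f := @f32 r) (g := g32 r)).
- move=> s /andP[Ks /forall_subset sW].
  exact: (@indep_image _ _ _ _ (@W3 r) (@f32 r) (fun x y => @f32_simpl r x y hr) s Ks sW).
- move=> s Ks; apply/andP; split.
    exact: (indep_imageT (fun x y => @g32_simpl r x y hr) Ks).
  by apply/forallP => z; apply/implyP => /imsetP[x _ ->]; apply: g32_W.
- move=> s /andP[Ks /forall_subset sW]; rewrite -imset_comp; apply/andP; split.
    exact: (@indep_contig _ _ (@W3 r) (g32 r \o @f32 r) (fun x y => @h32_contig r x y hr) s Ks sW).
  apply/forallP => z; apply/implyP; rewrite inE => /orP[/sW //|/imsetP[x _ ->]].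
  exact: g32_W.
- move=> s Ks; rewrite -imset_comp.
  exact: (indep_contigT (fun x y => @k32_contig r x y hr) Ks).
Qed.

Lemma susp2_eq (V : finType) (a : rel V) :
  susp (susp (indep_complex a)) = indep_complex (susp_adj (susp_adj a)).
Proof.
have e1 : susp (indep_complex a) = indep_complex (susp_adj a).
  by apply: functional_extensionality => s; apply: susp_indep.
by rewrite e1; apply: functional_extensionality => s; apply: susp_indep.
Qed.

Lemma case_k4 (p r : nat) : (2 <= r)%N ->
  homotopy_equiv (@I_Hring p.+4 r.+1) (@susp2_I_H p.+2 r.+1).
Proof.
move=> hr; rewrite /susp2_I_H susp2_eq.
apply: (vmap_equiv (f := @fA p r) (g := @gA p r)).
- move=> s Ks; exact: (indep_imageT (fun x y => @fA_simpl p r x y hr) Ks).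
- move=> s Ks; exact: (indep_imageT (fun x y => @gA_simpl p r x y hr) Ks).
- move=> s Ks; rewrite -imset_comp.
  exact: (indep_contigT (fun x y => @hA_contig p r x y hr) Ks).
- move=> s Ks; rewrite -imset_comp.
  exact: (indep_contigT (fun x y => @kA_contig p r x y hr) Ks).
Qed.

Theorem mainTheorem16 (n : nat) :
  (3 <= n)%N ->
  [/\ homotopy_equiv (@I_Hring 2 n) (@sphere 2),
      homotopy_equiv (@I_Hring 3 n) (@sphere 3) &
      forall k : nat, (4 <= k)%N ->
        homotopy_equiv (@I_Hring k n) (@susp2_I_H (k - 2) n)].
Proof.
case: n => [//|r] hn.
have hr : (2 <= r)%N by [].
split; [exact: case_k2 | exact: case_k3 |].
move=> k hk.
have [p ->] : exists p, k = p.+4 by exists (k - 4); lia.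
have -> : (p.+4 - 2 = p.+2)%N by lia.
exact: case_k4.
Qed.
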